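(* Let $\Theta$ and $\Theta'$ be causally complete spaces of input histories with $E^\Theta\cap E^{\Theta'}=\emptyset$. Then the parallel composition $\Theta\cup\Theta'$ and the sequential composition $\Theta\rightsquigarrow\Theta'$ are causally complete.
   Context: A partial function is a function $f$ with domain $\mathrm{dom}(f)$ a subset of an index set, values in given sets; ordered by restriction. Compatible = agreeing on common domain; a compatible set $\mathcal F$ has join $\bigvee\mathcal F$ (union); $k\vee h$ is the join of two compatible functions. $\Theta$ is $\vee$-prime if for compatible $\mathcal F\subseteq\Theta$ with $\bigvee\mathcal F\in\Theta$ we have $\bigvee\mathcal F\in\mathcal F$. A space of input histories is a finite $\vee$-prime set of partial functions; $E^\Theta=\bigcup_{h\in\Theta}\mathrm{dom}(h)$, $I^\Theta_\omega=\{h(\omega):h\in\Theta,\omega\in\mathrm{dom}(h)\}$, $\mathrm{Ext}(\Theta)=\{\bigvee\mathcal F:\emptyset\ne\mathcal F\subseteq\Theta\text{ compatible}\}$. Free-choice: maximal elements of $\mathrm{Ext}(\Theta)$ are exactly the total functions in $\prod_{\omega\in E^\Theta}I^\Theta_\omega$. $\mathrm{tips}_\Theta(h)=\mathrm{dom}(h)\setminus\bigcup\{\mathrm{dom}(k):k\in\mathrm{Ext}(\Theta),k<h\}$. Causally complete: free-choice and $|\mathrm{tips}_\Theta(h)|=1$ for all $h\in\Theta$. For spaces with disjoint event sets, the parallel composition is the union $\Theta\cup\Theta'$ and the sequential composition is $\Theta\rightsquigarrow\Theta'=\Theta\cup\{k\vee h':k\in\max\mathrm{Ext}(\Theta),\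 h'\in\Theta'\}$. *)

(* Defs.v *)
From Stdlib Require Import List.
Set Implicit Arguments.

(* A partial function on the index set I with values in X:
   its domain is the set of i with h i <> None. *)
Definition pfun (I X : Type) := I -> option X.

Definition pset (I X : Type) := pfun I X -> Prop.

Section Defs.
Variables (I X : Type).
Implicit Types (h k j : pfun I X) (F Theta : pset I X).

Definition dom h (i : I) : Prop := h i <> None.

Definition pf_le k h : Prop := forall i x, k i = Some x -> h i = Some x.
Definition pf_lt k h : Prop := pf_le k h /\ k <> h.

Definition compatible F : Prop :=
  forall f g i x y, F f -> F g -> f i = Some x -> g i = Some y -> x = y.

Definition is_join F j : Prop :=
  forall i x, j i = Some x <-> exists f, F f /\ f i = Some x.

Definition is_join2 k h j : Prop :=
  forall i x, j i = Some x <-> (k i = Some x \/ h i = Some x).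

Definition subset F Theta : Prop := forall f, F f -> Theta f.

Definition finite_pset Theta : Prop :=
  exists l : list (pfun I X), forall h, Theta h <-> In h l.

Definition vee_prime Theta : Prop :=
  forall F j, subset F Theta -> compatible F -> is_join F j -> Theta j -> F j.

Definition space Theta : Prop := finite_pset Theta /\ vee_prime Theta.

Definition events Theta (i : I) : Prop := exists h, Theta h /\ dom h i.

Definition inputs Theta (i : I) (x : X) : Prop := exists h, Theta h /\ h i = Some x.

Definition Ext Theta k : Prop :=
  exists F, subset F Theta /\ (exists f, F f) /\ compatible F /\ is_join F k.

Definition maxExt Theta k : Prop :=
  Ext Theta k /\ forall k', Ext Theta k' -> pf_le k k' -> k' = k.

(* total functions in prod_{w in E^Theta} I^Theta_w *)
Definition total_on Theta k : Prop :=
  forall i, (events Theta i -> exists x, k i = Some x /\ inputs Theta i x) /\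
            (~ events Theta i -> k i = None).

Definition free_choice Theta : Prop :=
  forall k, maxExt Theta k <-> total_on Theta k.

Definition tips Theta h (i : I) : Prop :=
  dom h i /\ ~ (exists k, Ext Theta k /\ pf_lt k h /\ dom k i).

Definition causally_complete Theta : Prop :=
  free_choice Theta /\ forall h, Theta h -> exists! i, tips Theta h i.

Definition disjoint_events Theta Theta' : Prop :=
  forall i, events Theta i -> events Theta' i -> False.

Definition par_comp Theta Theta' : pset I X := fun h => Theta h \/ Theta' h.

Definition seq_comp Theta Theta' : pset I X := fun h =>
  Theta h \/ exists k h', maxExt Theta k /\ Theta' h' /\ is_join2 k h' h.

End Defs.

(* Main.v *)
Require Import Defs.
From Stdlib Require Import List Classical FunctionalExtensionality ClassicalEpsilon.
Import ListNotations.
Set Implicit Arguments.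

Ltac emi P := destruct (excluded_middle_informative P).

Lemma opt_ext (X : Type) (a b : option X) : (forall x, a = Some x <-> b = Some x) -> a = b.
Proof.
  intros H. destruct a as [x|], b as [y|]; try reflexivity.
  - symmetry. apply (H x). reflexivity.
  - exfalso. specialize (H x). destruct H as [H1 _]. discriminate (H1 eq_refl).
  - specialize (H y). destruct H as [_ H2]. discriminate (H2 eq_refl).
Qed.

Section G.
Variables (I X : Type).
Implicit Types (h k j f g t : pfun I X) (F T : pset I X).

Lemma pf_antisym k h : pf_le k h -> pf_le h k -> k = h.
Proof. intros H1 H2. extensionality i. apply opt_ext; split; [apply H1|apply H2]. Qed.

Lemma pf_trans (a b c : pfun I X) : pf_le a b -> pf_le b c -> pf_le a c.
Proof. intros H1 H2 i x H. apply H2, H1, H. Qed.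

Lemma Ext_val T k i x : Ext T k -> k i = Some x -> inputs T i x.
Proof.
  intros (F & HS & _ & _ & HJ) Hk. apply HJ in Hk. destruct Hk as (f & Hf & Hfi).
  exists f; split; auto.
Qed.

Lemma inputs_events T i x : inputs T i x -> events T i.
Proof. intros (h & Hh & Hi). exists h. split; auto. unfold dom. rewrite Hi. discriminate. Qed.

Lemma events_inputs T i : events T i -> exists x, inputs T i x.
Proof.
  intros (h & Hh & Hd). unfold dom in Hd. destruct (h i) as [x|] eqn:E; [|congruence].
  exists x, h; auto.
Qed.

Lemma Ext_ev T k i x : Ext T k -> k i = Some x -> events T i.
Proof. intros; eapply inputs_events, Ext_val; eauto. Qed.

Lemma mem_ev T h i x : T h -> h i = Some x -> events T i.
Proof. intros H1 H2. eapply inputs_events. exists h; eauto. Qed.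

Lemma Ext_le F k f : is_join F k -> F f -> pf_le f k.
Proof. intros HJ Hf i x Hi. apply HJ. exists f; auto. Qed.

Lemma join_of_le F k : (forall f, F f -> pf_le f k) ->
  (forall i x, k i = Some x -> exists f, F f /\ f i = Some x) -> compatible F /\ is_join F k.
Proof.
  intros H H0. split.
  - intros f g i x y Hf Hg Hx Hy. apply (H f Hf) in Hx. apply (H g Hg) in Hy. congruence.
  - intros i x; split; [apply H0|]. intros (f & Hf & Hi). exact (H f Hf i x Hi).
Qed.

Lemma Ext_mono (T1 T2 : pset I X) (k : pfun I X) : (forall f, T1 f -> T2 f) -> Ext T1 k -> Ext T2 k.
Proof.
  intros H (F & HS & HN & HC & HJ). exists F.
  refine (conj _ (conj HN (conj HC HJ))). intros f Hf; apply H, HS, Hf.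
Qed.

Lemma Ext_sub (T1 T2 : pset I X) (k : pfun I X) : Ext T2 k -> (forall f, T2 f -> pf_le f k -> T1 f) -> Ext T1 k.
Proof.
  intros (F & HS & HN & HC & HJ) H. exists F.
  refine (conj _ (conj HN (conj HC HJ))). intros f Hf.
  apply H; [apply HS; auto | eapply Ext_le; eauto].
Qed.

Lemma tips_equiv (T1 T2 : pset I X) h : (forall k, pf_le k h -> (Ext T1 k <-> Ext T2 k)) ->
  forall i, tips T1 h i <-> tips T2 h i.
Proof.
  intros H i; unfold tips; split; intros [Hd Hn]; split; auto;
  intros (k & Hk & Hlt & Hdk); apply Hn; exists k; split; auto;
  apply (H k (proj1 Hlt)); auto.
Qed.

Lemma unique_transfer (P Q : I -> Prop) : (forall i, P i <-> Q i) -> (exists! i, P i) -> exists! i, Q i.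
Proof.
  intros H (i & Hi & Hu). exists i; split; [apply H; auto|]. intros j Hj; apply Hu, H, Hj.
Qed.

Lemma nonempty_mem T h : vee_prime T -> T h -> exists i x, h i = Some x.
Proof.
  intros HV Hh. apply NNPP; intro Hn.
  assert (Hnone : forall i, h i = None).
  { intro i. destruct (h i) eqn:E; auto. exfalso; apply Hn; eauto. }
  refine (HV (fun _ => False) h _ _ _ Hh).
  - intros f [].
  - intros f g i x y [].
  - intros i x; rewrite Hnone; split; [discriminate | intros (f & [] & _)].
Qed.

Definition ext_tot T k : pfun I X := fun i =>
  match k i with
  | Some x => Some x
  | None => match excluded_middle_informative (exists x, inputs T i x) with
            | left H => Some (proj1_sig (constructive_indefinite_description _ H))
            | right _ => None end
  end.

Lemma ext_tot_spec T k : (forall i x, k i = Some x -> inputs T i x) ->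
  total_on T (ext_tot T k) /\ pf_le k (ext_tot T k).
Proof.
  intros Hk; split.
  - intro i; unfold ext_tot; split.
    + intro He. destruct (k i) as [x|] eqn:E.
      * exists x; split; eauto.
      * destruct (excluded_middle_informative _) as [H|H].
        -- destruct (constructive_indefinite_description _ H) as [y Hy]; simpl. eauto.
        -- exfalso; apply H, events_inputs, He.
    + intro Hne. destruct (k i) as [x|] eqn:E.
      * exfalso; apply Hne; eapply inputs_events; eauto.
      * destruct (excluded_middle_informative _) as [H|H]; auto.
        exfalso. destruct H as [x Hx]. apply Hne; eapply inputs_events; eauto.
  - intros i x Hi; unfold ext_tot; rewrite Hi; auto.
Qed.

Lemma fc_of T : (forall k, total_on T k -> Ext T k) -> free_choice T.
Proof.
  intros H k; split.
  - intros [HE Hmax]. destruct (ext_tot_spec (T:=T) k) as [Ht Hle].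
    { intros; eapply Ext_val; eauto. }
    assert (Heq := Hmax _ (H _ Ht) Hle). rewrite <- Heq; exact Ht.
  - intros Ht. split; [apply H, Ht|]. intros k' HE' Hle. apply pf_antisym; [|exact Hle].
    intros i x Hi. assert (He : events T i) by (eapply Ext_ev; eauto).
    destruct (proj1 (Ht i) He) as (y & Hy & _). rewrite Hy.
    rewrite (Hle _ _ Hy) in Hi. exact Hi.
Qed.

Lemma fc_tot T k : free_choice T -> total_on T k -> Ext T k.
Proof. intros H H0. apply H in H0. apply H0. Qed.

Lemma fc_max T k : free_choice T -> maxExt T k -> total_on T k.
Proof. intros H H0. apply H, H0. Qed.

Lemma maxExt_exists T : free_choice T -> exists t, maxExt T t.
Proof.
  intros HF. exists (ext_tot T (fun _ => None)). apply HF.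
  apply ext_tot_spec. intros; discriminate.
Qed.

Definition restr (P : I -> Prop) k : pfun I X := fun i =>
  if excluded_middle_informative (P i) then k i else None.

Lemma restr_le P k : pf_le (restr P k) k.
Proof. intros i x; unfold restr; emi (P i); congruence. Qed.
Lemma restr_in P k i : P i -> restr P k i = k i.
Proof. unfold restr; emi (P i); tauto. Qed.
Lemma restr_out P k i : ~ P i -> restr P k i = None.
Proof. unfold restr; emi (P i); tauto. Qed.

Lemma dis_sym (T1 T2 : pset I X) : disjoint_events T1 T2 -> disjoint_events T2 T1.
Proof. intros H i a b; exact (H i b a). Qed.

Lemma tot_eq T t1 t2 : free_choice T -> maxExt T t1 -> maxExt T t2 ->
  (forall i x y, t1 i = Some x -> t2 i = Some y -> x = y) -> t1 = t2.
Proof.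
  intros HF H1 H2 Hag. apply HF in H1; apply HF in H2. extensionality i.
  destruct (classic (events T i)) as [H|H].
  - destruct (proj1 (H1 i) H) as (x & Hx & _); destruct (proj1 (H2 i) H) as (y & Hy & _).
    rewrite Hx, Hy. f_equal; eauto.
  - rewrite (proj2 (H1 i) H), (proj2 (H2 i) H); auto.
Qed.

End G.

Section P.
Variables (I X : Type).
Implicit Types (h k j f g t : pfun I X) (F T : pset I X).

Lemma side (A B : pset I X) h f : disjoint_events A B -> vee_prime B -> A h -> pf_le f h ->
  (A f \/ B f) -> A f.
Proof.
  intros HD HV Hh Hle [Hf|Hf]; auto. exfalso.
  destruct (nonempty_mem _ HV Hf) as (i & x & Hi). apply (HD i).
  - eapply mem_ev; [exact Hh| apply Hle, Hi].
  - eapply mem_ev; eauto.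
Qed.

Lemma par_inputs (T1 T2 : pset I X) i x :
  inputs (par_comp T1 T2) i x <-> inputs T1 i x \/ inputs T2 i x.
Proof.
  split.
  - intros (h & [Hh|Hh] & Hi); [left|right]; exists h; auto.
  - intros [(h & Hh & Hi)|(h & Hh & Hi)]; exists h; split; auto; [left|right]; auto.
Qed.

Lemma par_events (T1 T2 : pset I X) i :
  events (par_comp T1 T2) i <-> events T1 i \/ events T2 i.
Proof.
  split.
  - intros (h & [Hh|Hh] & Hi); [left|right]; exists h; auto.
  - intros [(h & Hh & Hi)|(h & Hh & Hi)]; exists h; split; auto; [left|right]; auto.
Qed.

Lemma par_space (T1 T2 : pset I X) : space T1 -> space T2 -> disjoint_events T1 T2 ->
  space (par_comp T1 T2).
Proof.
  intros [[l Hl] HV1] [[l' Hl'] HV2] HD. split.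
  - exists (l ++ l'). intro h; rewrite in_app_iff; unfold par_comp; rewrite Hl, Hl'. tauto.
  - intros F j HS HC HJ [Hj|Hj].
    + apply HV1; auto. intros f Hf.
      exact (side HD HV2 Hj (Ext_le _ HJ Hf) (HS f Hf)).
    + apply HV2; auto. intros f Hf.
      refine (side (dis_sym HD) HV1 Hj (Ext_le _ HJ Hf) _).
      destruct (HS f Hf); tauto.
Qed.

Lemma par_tot (T1 T2 : pset I X) k : disjoint_events T1 T2 -> free_choice T1 -> free_choice T2 ->
  total_on (par_comp T1 T2) k -> Ext (par_comp T1 T2) k.
Proof.
  intros HD HF1 HF2 Ht.
  set (k1 := restr (events T1) k). set (k2 := restr (events T2) k).
  assert (Ht1 : total_on T1 k1).
  { intro i; split.
    - intro He. unfold k1; rewrite restr_in by auto.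
      destruct (proj1 (Ht i)) as (x & Hx & Hin). { apply par_events; left; auto. }
      exists x; split; auto. apply par_inputs in Hin. destruct Hin as [Hin|Hin]; auto.
      exfalso; apply (HD i); auto; eapply inputs_events; eauto.
    - intro Hn; unfold k1; apply restr_out; auto. }
  assert (Ht2 : total_on T2 k2).
  { intro i; split.
    - intro He. unfold k2; rewrite restr_in by auto.
      destruct (proj1 (Ht i)) as (x & Hx & Hin). { apply par_events; right; auto. }
      exists x; split; auto. apply par_inputs in Hin. destruct Hin as [Hin|Hin]; auto.
      exfalso; apply (HD i); auto; eapply inputs_events; eauto.
    - intro Hn; unfold k2; apply restr_out; auto. }
  destruct (fc_tot HF1 Ht1) as (F1 & HS1 & [f1 Hf1] & _ & HJ1).
  destruct (fc_tot HF2 Ht2) as (F2 & HS2 & _ & _ & HJ2).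
  destruct (join_of_le (fun f => F1 f \/ F2 f) (k := k)) as [HC HJ].
  - intros f [Hf|Hf]; intros i x Hi; [apply (restr_le (events T1)) | apply (restr_le (events T2))]; [eapply (Ext_le _ HJ1 Hf) | eapply (Ext_le _ HJ2 Hf)]; eauto.
  - intros i x Hi. destruct (classic (events T1 i)) as [H1|H1].
    + assert (H : k1 i = Some x) by (unfold k1; rewrite restr_in; auto).
      apply HJ1 in H. destruct H as (f & Hf & Hfi); exists f; auto.
    + destruct (classic (events T2 i)) as [H2|H2].
      * assert (H : k2 i = Some x) by (unfold k2; rewrite restr_in; auto).
        apply HJ2 in H. destruct H as (f & Hf & Hfi); exists f; auto.
      * exfalso. rewrite (proj2 (Ht i)) in Hi; [discriminate|].
        rewrite par_events; tauto.
  - exists (fun f => F1 f \/ F2 f). split.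
    + intros f [Hf|Hf]; [left; apply HS1 | right; apply HS2]; auto.
    + split; [exists f1; left; auto|]. split; auto.
Qed.

Lemma par_tips (A B : pset I X) h : disjoint_events A B -> vee_prime B -> A h ->
  forall i, tips A h i <-> tips (par_comp A B) h i.
Proof.
  intros HD HV Hh. apply tips_equiv. intros k Hk; split; intro HE.
  - eapply Ext_mono; [|exact HE]. intros f Hf; left; auto.
  - eapply Ext_sub; [exact HE|]. intros f Hf Hfk. eapply side; eauto. eapply pf_trans; eauto.
Qed.

Lemma par_swap_Ext (A B : pset I X) k : Ext (par_comp A B) k <-> Ext (par_comp B A) k.
Proof.
  split; apply Ext_mono; intros f Hf; unfold par_comp in *; tauto.
Qed.

Lemma par_cc (T1 T2 : pset I X) : space T1 -> causally_complete T1 -> space T2 ->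
  causally_complete T2 -> disjoint_events T1 T2 -> causally_complete (par_comp T1 T2).
Proof.
  intros [_ HV1] [HF1 HT1] [_ HV2] [HF2 HT2] HD. split.
  - apply fc_of. intros; apply par_tot; auto.
  - intros h [Hh|Hh].
    + eapply unique_transfer; [apply par_tips; eauto | apply HT1; auto].
    + eapply unique_transfer; [|apply HT2; eauto].
      intro i. rewrite (par_tips _ (dis_sym HD) HV1 Hh).
      apply tips_equiv. intros; apply par_swap_Ext.
Qed.

End P.

Section Q.
Variables (I X : Type).
Implicit Types (h k j f g t : pfun I X) (F T : pset I X).

Definition join2f k h : pfun I X := fun i =>
  match k i with Some x => Some x | None => h i end.

Lemma is_join2_eq k h j : is_join2 k h j -> j = join2f k h.
Proof.
  intro H; extensionality i. unfold join2f. destruct (k i) as [a|] eqn:E.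
  - apply H. left; auto.
  - apply opt_ext. intro x. rewrite (H i x). rewrite E.
    split; [intros [Hc|Hc]; [discriminate|auto] | auto].
Qed.

Lemma join2f_is (T1 T2 : pset I X) k h : (forall i x, k i = Some x -> events T1 i) ->
  (forall i x, h i = Some x -> events T2 i) -> disjoint_events T1 T2 ->
  is_join2 k h (join2f k h).
Proof.
  intros Hk Hh HD i x; unfold join2f; destruct (k i) as [a|] eqn:E; split; auto.
  - intros [H|H]; auto. exfalso; apply (HD i); [eapply Hk; eauto| eapply Hh; eauto].
  - intros [H|H]; [discriminate|auto].
Qed.

Lemma seq_inputs (T1 T2 : pset I X) i x : disjoint_events T1 T2 -> (exists t, maxExt T1 t) ->
  (inputs (seq_comp T1 T2) i x <-> inputs T1 i x \/ inputs T2 i x).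
Proof.
  intros HD [t Ht]. split.
  - intros (h & [Hh|(t2 & h' & Ht2 & Hh' & Hj)] & Hi).
    + left; exists h; auto.
    + apply Hj in Hi. destruct Hi as [Hi|Hi].
      * left; eapply Ext_val; [apply Ht2|]; eauto.
      * right; exists h'; auto.
  - intros [(h & Hh & Hi)|(h' & Hh' & Hi)].
    + exists h; split; [left|]; auto.
    + exists (join2f t h'); split.
      * right; exists t, h'; split; auto; split; auto.
        eapply join2f_is; [intros; eapply Ext_ev; [apply Ht|]; eauto
                          | intros; eapply mem_ev; eauto | eauto].
      * unfold join2f. destruct (t i) eqn:E; auto. exfalso.
        apply (HD i); [eapply Ext_ev; [apply Ht| eauto] | eapply mem_ev; eauto].
Qed.

Lemma seq_events (T1 T2 : pset I X) i : disjoint_events T1 T2 -> (exists t, maxExt T1 t) ->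
  (events (seq_comp T1 T2) i <-> events T1 i \/ events T2 i).
Proof.
  intros HD Hex. split.
  - intro H. destruct (events_inputs H) as [x Hx].
    apply seq_inputs in Hx; auto. destruct Hx; [left|right]; eapply inputs_events; eauto.
  - intros [H|H]; destruct (events_inputs H) as [x Hx]; eapply inputs_events;
      apply seq_inputs; eauto.
Qed.

Lemma seq_join_ext (T1 T2 : pset I X) t k' : disjoint_events T1 T2 -> maxExt T1 t -> Ext T2 k' ->
  Ext (seq_comp T1 T2) (join2f t k').
Proof.
  intros HD Ht (F & HS & [g0 Hg0] & HC & HJ).
  destruct (join_of_le (fun f => exists g, F g /\ f = join2f t g) (k := join2f t k')) as [HC' HJ'].
  - intros f (g & Hg & ->) i x. unfold join2f. destruct (t i); auto.
    intro; eapply (Ext_le _ HJ Hg); eauto.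
  - intros i x. unfold join2f at 1. destruct (t i) eqn:E.
    + intro H; exists (join2f t g0); split; [eauto|]. unfold join2f; rewrite E; auto.
    + intro H. apply HJ in H. destruct H as (g & Hg & Hgi).
      exists (join2f t g); split; eauto. unfold join2f; rewrite E; auto.
  - exists (fun f => exists g, F g /\ f = join2f t g). split.
    + intros f (g & Hg & ->). right. exists t, g. split; auto. split; [apply HS; auto|].
      eapply join2f_is; [intros; eapply Ext_ev; [apply Ht|]; eauto
                        | intros; eapply mem_ev; [apply HS|]; eauto | eauto].
    + split; [exists (join2f t g0); eauto|]. auto.
Qed.

Lemma seq_tot (T1 T2 : pset I X) k : disjoint_events T1 T2 -> free_choice T1 -> free_choice T2 ->
  total_on (seq_comp T1 T2) k -> Ext (seq_comp T1 T2) k.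
Proof.
  intros HD HF1 HF2 Ht. assert (Hex := maxExt_exists HF1).
  set (t := restr (events T1) k). set (k2 := restr (events T2) k).
  assert (Ht1 : total_on T1 t).
  { intro i; split.
    - intro He. unfold t; rewrite restr_in by auto.
      destruct (proj1 (Ht i)) as (x & Hx & Hin). { apply seq_events; auto. }
      exists x; split; auto. apply seq_inputs in Hin; auto. destruct Hin as [Hin|Hin]; auto.
      exfalso; apply (HD i); auto; eapply inputs_events; eauto.
    - intro Hn; unfold t; apply restr_out; auto. }
  assert (Ht2 : total_on T2 k2).
  { intro i; split.
    - intro He. unfold k2; rewrite restr_in by auto.
      destruct (proj1 (Ht i)) as (x & Hx & Hin). { apply seq_events; auto. }
      exists x; split; auto. apply seq_inputs in Hin; auto. destruct Hin as [Hin|Hin]; auto.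
      exfalso; apply (HD i); auto; eapply inputs_events; eauto.
    - intro Hn; unfold k2; apply restr_out; auto. }
  assert (Heq : join2f t k2 = k).
  { extensionality i. unfold join2f, t, k2. destruct (classic (events T1 i)) as [H1|H1].
    - rewrite restr_in by auto. destruct (k i) eqn:E; auto.
      unfold restr. destruct (excluded_middle_informative _); auto.
    - rewrite restr_out by auto. destruct (classic (events T2 i)) as [H2|H2].
      + apply restr_in; auto.
      + rewrite restr_out by auto. symmetry. apply (proj2 (Ht i)).
        rewrite seq_events; auto. tauto. }
  rewrite <- Heq. apply seq_join_ext; auto. apply HF1; auto. apply fc_tot; auto.
Qed.

Lemma seq_vee (T1 T2 : pset I X) : disjoint_events T1 T2 -> vee_prime T1 -> vee_prime T2 ->
  free_choice T1 -> vee_prime (seq_comp T1 T2).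
Proof.
  intros HD HV1 HV2 HF1 F j HS HC HJ [Hj|(t & h' & Ht & Hh' & Hj)].
  - apply HV1; auto. intros f Hf.
    destruct (HS f Hf) as [H|(t2 & g & Ht2 & Hg & Hfj)]; auto. exfalso.
    destruct (nonempty_mem _ HV2 Hg) as (i & x & Hi). apply (HD i).
    + apply (mem_ev (x := x) T1 j i Hj). apply (Ext_le _ HJ Hf). apply Hfj. right; auto.
    + eapply mem_ev; eauto.
  - set (G := fun g => T2 g /\ exists f t2, F f /\ maxExt T1 t2 /\ is_join2 t2 g f).
    destruct (join_of_le G (k := h')) as [HC' HJ'].
    + intros g (Hg & f & t2 & Hf & Ht2 & Hj2) i x Hgi.
      assert (Hji : j i = Some x). { apply (Ext_le _ HJ Hf). apply Hj2. right; auto. }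
      apply Hj in Hji. destruct Hji as [Hti|]; auto. exfalso.
      apply (HD i); [eapply Ext_ev; [apply Ht|eauto] | eapply mem_ev; eauto].
    + intros i x Hi. assert (Hji : j i = Some x) by (apply Hj; right; auto).
      destruct (proj1 (HJ i x) Hji) as (f & Hf & Hfi).
      destruct (HS f Hf) as [HfT|(t3 & g & Ht3 & Hg & Hj3)].
      * exfalso; apply (HD i); [eapply mem_ev; eauto | eapply mem_ev; eauto].
      * apply Hj3 in Hfi. destruct Hfi as [Hfi|Hfi].
        -- exfalso; apply (HD i); [eapply Ext_ev; [apply (proj1 Ht3)|exact Hfi] | eapply mem_ev; [exact Hh'|exact Hi]].
        -- exists g; split; auto. split; auto. exists f, t3; split; [|split]; auto.
    + assert (HG : G h') by (apply HV2; auto; intros g Hg; apply Hg).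
      destruct HG as (_ & f & t2 & Hf & Ht2 & Hj2).
      assert (Htt : t2 = t).
      { apply (tot_eq HF1 Ht2 Ht). intros i a b Ha Hb.
        assert (j i = Some a) by (apply (Ext_le _ HJ Hf); apply Hj2; left; auto).
        assert (j i = Some b) by (apply Hj; left; auto). congruence. }
      assert (Hfj : f = j).
      { rewrite (is_join2_eq Hj2). rewrite (is_join2_eq Hj). rewrite Htt. reflexivity. }
      rewrite <- Hfj; auto.
Qed.

Lemma seq_tips1 (T1 T2 : pset I X) h : disjoint_events T1 T2 -> vee_prime T2 -> T1 h ->
  forall i, tips T1 h i <-> tips (seq_comp T1 T2) h i.
Proof.
  intros HD HV Hh. apply tips_equiv. intros k Hk; split; intro HE.
  - eapply Ext_mono; [|exact HE]. intros f Hf; left; auto.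
  - eapply Ext_sub; [exact HE|]. intros f Hf Hfk.
    destruct Hf as [Hf|(t2 & g & Ht2 & Hg & Hfj)]; auto. exfalso.
    destruct (nonempty_mem _ HV Hg) as (i & x & Hi). apply (HD i).
    + apply (mem_ev (x := x) T1 h i Hh). apply Hk, Hfk, Hfj. right; auto.
    + eapply mem_ev; eauto.
Qed.

End Q.

Section R.
Variables (I X : Type).
Implicit Types (h k j f g t : pfun I X) (F T : pset I X).

Lemma seq_tips2 (T1 T2 : pset I X) t h' h : disjoint_events T1 T2 -> vee_prime T2 ->
  free_choice T1 -> maxExt T1 t -> T2 h' -> is_join2 t h' h ->
  (exists! i, tips T2 h' i) -> exists! i, tips (seq_comp T1 T2) h i.
Proof.
  intros HD HV2 HF1 Ht Hh' Hj (i0 & Hi0 & Hu).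
  assert (HE : forall i x, t i = Some x -> events T1 i).
  { intros i x H. exact (Ext_ev i (proj1 Ht) H). }
  assert (HE' : forall i x, h' i = Some x -> events T2 i).
  { intros i x H. exact (mem_ev T2 h' i Hh' H). }
  exists i0; split.
  - destruct Hi0 as [Hd0 Hn0]. unfold dom in Hd0.
    destruct (h' i0) as [y0|] eqn:E0; [|congruence].
    split. { unfold dom. rewrite (proj2 (Hj i0 y0) (or_intror E0)). discriminate. }
    intros (k & (F & HS & _ & HC & HJ) & [Hkh Hkneq] & Hdk).
    unfold dom in Hdk; destruct (k i0) as [y|] eqn:Ek; [|congruence].
    destruct (proj1 (HJ i0 y) Ek) as (f0 & Hf0 & Hf0i).
    destruct (HS f0 Hf0) as [Hf0T|(t2 & g0 & Ht2 & Hg0 & Hj0)].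
    { exfalso. apply (HD i0); [exact (mem_ev T1 f0 i0 Hf0T Hf0i) | eauto]. }
    set (G := fun g => T2 g /\ exists f t3, F f /\ maxExt T1 t3 /\ is_join2 t3 g f).
    set (k' := restr (events T2) k).
    assert (Hk'E : Ext T2 k').
    { destruct (join_of_le G (k := k')) as [HC' HJ'].
      - intros g (Hg & f & t3 & Hf & Ht3 & Hj3) i x Hgi. unfold k'.
        rewrite restr_in by exact (mem_ev T2 g i Hg Hgi).
        apply (Ext_le _ HJ Hf). apply Hj3. right; auto.
      - intros i x Hi. unfold k', restr in Hi.
        destruct (excluded_middle_informative (events T2 i)) as [He|He]; [|discriminate].
        destruct (proj1 (HJ i x) Hi) as (f & Hf & Hfi).
        destruct (HS f Hf) as [HfT|(t3 & g & Ht3 & Hg & Hj3)].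
        + exfalso; apply (HD i); [exact (mem_ev T1 f i HfT Hfi)|auto].
        + apply Hj3 in Hfi. destruct Hfi as [Hfi|Hfi].
          * exfalso; apply (HD i); [exact (Ext_ev i (proj1 Ht3) Hfi)|auto].
          * exists g; split; auto. split; auto. exists f, t3; split; [|split]; auto.
      - exists G. split; [intros g Hg; apply Hg|]. split.
        + exists g0. split; auto. exists f0, t2; split; [|split]; auto.
        + auto. }
    assert (Hk'le : pf_le k' h').
    { intros i x Hi. unfold k', restr in Hi.
      destruct (excluded_middle_informative (events T2 i)) as [He|He]; [|discriminate].
      apply Hkh in Hi. apply Hj in Hi. destruct Hi as [Hi|Hi]; auto.
      exfalso; apply (HD i); [eapply HE; eauto| auto]. }
    assert (Htt : t2 = t).
    { apply (tot_eq HF1 Ht2 Ht). intros i a b Ha Hb.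
      assert (h i = Some a) by (apply Hkh, (Ext_le _ HJ Hf0), Hj0; left; auto).
      assert (h i = Some b) by (apply Hj; left; auto). congruence. }
    assert (Hk'ne : k' <> h').
    { intro Heq. apply Hkneq. apply pf_antisym; auto. intros i x Hi. apply Hj in Hi.
      destruct Hi as [Hi|Hi].
      - apply (Ext_le _ HJ Hf0). apply Hj0. left. rewrite Htt; auto.
      - rewrite <- Heq in Hi. unfold k', restr in Hi.
        destruct (excluded_middle_informative (events T2 i)); [auto|discriminate]. }
    apply Hn0. exists k'. split; auto. split; [split; auto|].
    unfold dom, k'. rewrite restr_in by exact (HE' i0 y0 E0). rewrite Ek; discriminate.
  - intros i [Hd Hn]. unfold dom in Hd. destruct (h i) as [x|] eqn:Ehi; [|congruence].
    apply Hj in Ehi. destruct Ehi as [Hti|Hhi].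
    + exfalso. apply Hn. exists t. split.
      { eapply Ext_mono; [|apply (proj1 Ht)]. intros f Hf; left; auto. }
      split; [split|].
      * intros a b Hab; apply Hj; left; auto.
      * intro Heq. destruct (nonempty_mem _ HV2 Hh') as (a & b & Hab).
        assert (H : h a = Some b) by (apply Hj; right; auto).
        rewrite <- Heq in H. apply (HD a); [eapply HE; eauto| eapply HE'; eauto].
      * unfold dom; rewrite Hti; discriminate.
    + apply Hu. split; [unfold dom; rewrite Hhi; discriminate|].
      intros (k' & Hk' & [Hle Hne] & Hdk'). apply Hn. exists (join2f t k'). split.
      { eapply seq_join_ext; eauto. }
      split; [split|].
      * intros a b Hab. unfold join2f in Hab. destruct (t a) eqn:Ea.
        -- apply Hj; left; congruence.
        -- apply Hj; right; apply Hle; auto.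
      * intro Heq. apply Hne. apply pf_antisym; auto. intros a b Hab.
        assert (H : h a = Some b) by (apply Hj; right; auto).
        rewrite <- Heq in H. unfold join2f in H. destruct (t a) eqn:Ea; auto.
        exfalso; apply (HD a); [eapply HE; eauto| eapply HE'; eauto].
      * unfold dom, join2f. destruct (t i) eqn:Ei; [|exact Hdk'].
        exfalso; apply (HD i); [eapply HE; eauto| eapply HE'; eauto].
Qed.

Fixpoint joinl (s : list (pfun I X)) : pfun I X := fun i =>
  match s with
  | nil => None
  | f :: s' => match f i with Some x => Some x | None => joinl s' i end
  end.

Lemma joinl_some s i x : joinl s i = Some x -> exists f, In f s /\ f i = Some x.
Proof.
  induction s as [|a s IH]; simpl; intros H. discriminate.
  destruct (a i) eqn:E.
  - inversion H; subst; exists a; auto.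
  - destruct (IH H) as (f & ? & ?); exists f; auto.
Qed.

Lemma joinl_def s f i y : In f s -> f i = Some y -> exists x, joinl s i = Some x.
Proof.
  induction s as [|a s IH]; simpl; [tauto|]. intros [<-|Hin] Hy.
  - rewrite Hy; eauto.
  - destruct (a i); eauto.
Qed.

Fixpoint sublists {A : Type} (l : list A) : list (list A) :=
  match l with
  | nil => [nil]
  | a :: l' => sublists l' ++ map (cons a) (sublists l')
  end.

Lemma filter_sub {A : Type} (p : A -> bool) l : In (filter p l) (sublists l).
Proof.
  induction l as [|a l IH]; simpl; [left; auto|].
  destruct (p a); apply in_app_iff; [right; apply in_map; auto | left; auto].
Qed.

Lemma Ext_list T l k : (forall h, T h <-> In h l) -> Ext T k ->
  exists s, In s (sublists l) /\ k = joinl s.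
Proof.
  intros Hl (F & HS & _ & HC & HJ).
  set (p := fun f => if excluded_middle_informative (F f) then true else false).
  exists (filter p l). split; [apply filter_sub|].
  extensionality i. apply opt_ext; intro x; split.
  - intro Hk. destruct (proj1 (HJ i x) Hk) as (f & Hf & Hfi).
    assert (Hin : In f (filter p l)).
    { apply filter_In. split. apply Hl, HS, Hf. unfold p.
      destruct (excluded_middle_informative (F f)); auto; contradiction. }
    destruct (joinl_def _ _ _ Hin Hfi) as (y & Hy).
    destruct (joinl_some _ _ Hy) as (f' & Hin' & Hf'i).
    apply filter_In in Hin'. destruct Hin' as [_ Hp]. unfold p in Hp.
    destruct (excluded_middle_informative (F f')) as [Hf'|]; [|discriminate].
    rewrite Hy. f_equal. exact (HC f' f i y x Hf' Hf Hf'i Hfi).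
  - intro Hj. destruct (joinl_some _ _ Hj) as (f & Hin & Hfi).
    apply filter_In in Hin; destruct Hin as [_ Hp]. unfold p in Hp.
    destruct (excluded_middle_informative (F f)) as [Hf|]; [|discriminate].
    apply HJ; eauto.
Qed.

Lemma seq_space (T1 T2 : pset I X) : space T1 -> space T2 -> disjoint_events T1 T2 ->
  free_choice T1 -> space (seq_comp T1 T2).
Proof.
  intros [[l Hl] HV1] [[l' Hl'] HV2] HD HF1. split; [|apply seq_vee; auto].
  exists (l ++ flat_map (fun s => if excluded_middle_informative (maxExt T1 (joinl s))
                                  then map (join2f (joinl s)) l' else nil) (sublists l)).
  intro h; rewrite in_app_iff, in_flat_map; split.
  - intros [Hh|(t & h' & Ht & Hh' & Hj)].
    + left; apply Hl; auto.
    + right. destruct (Ext_list _ Hl (proj1 Ht)) as (s & Hs & ->). exists s; split; auto.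
      destruct (excluded_middle_informative (maxExt T1 (joinl s))) as [_|Hn]; [|contradiction].
      rewrite (is_join2_eq Hj). apply in_map, Hl', Hh'.
  - intros [Hh|(s & Hs & Hin)].
    + left; apply Hl; auto.
    + destruct (excluded_middle_informative (maxExt T1 (joinl s))) as [Hm|_]; [|destruct Hin].
      apply in_map_iff in Hin. destruct Hin as (h' & <- & Hh').
      right. exists (joinl s), h'. split; auto. split; [apply Hl'; auto|].
      eapply join2f_is; [intros i x H; exact (Ext_ev i (proj1 Hm) H)
                        | intros i x H; exact (mem_ev T2 h' i (proj2 (Hl' h') Hh') H) | exact HD].
Qed.

End R.

Theorem proposition17 (I X : Type) (Theta Theta' : pset I X) :
  space Theta -> causally_complete Theta ->
  space Theta' -> causally_complete Theta' ->
  disjoint_events Theta Theta' ->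
  (space (par_comp Theta Theta') /\ causally_complete (par_comp Theta Theta')) /\
  (space (seq_comp Theta Theta') /\ causally_complete (seq_comp Theta Theta')).
Proof.
  intros HS1 HC1 HS2 HC2 HD. split; split.
  - apply par_space; auto.
  - apply par_cc; auto.
  - apply seq_space; auto. apply HC1.
  - destruct HS1 as [_ HV1]. destruct HS2 as [_ HV2].
    destruct HC1 as [HF1 HT1]. destruct HC2 as [HF2 HT2]. split.
    + apply fc_of. intros; apply seq_tot; auto.
    + intros h [Hh|(t & h' & Ht & Hh' & Hj)].
      * eapply unique_transfer; [apply seq_tips1; eauto | apply HT1; auto].
      * eapply seq_tips2; eauto.
Qed.
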